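(* Let $R$ be a finite group and let $\varphi$ be a non-identity automorphism of $R$. Then one of the following holds: (1) the number of inverse-closed subsets $S\subseteq R$ with $S^\varphi=S$ is at most $2^{\mathbf{c}(R)-|R|/96}$; (2) $A:=C_R(\varphi)$ is abelian of exponent greater than $2$ and has index $2$ in $R$, there is $x\in R\setminus A$ with $x^2$ an involution of $A$ and $xax^{-1}=a^{-1}$ for all $a\in A$ (so $R$ is generalized dicyclic over $A$), and $\varphi=\bar\iota_A$; (3) $R$ is abelian of exponent greater than $2$ and $\varphi=\iota$.
   Context: $\mathbf{I}(R)=\{x\in R\mid x^2=1\}$, $\mathbf{c}(R)=(|R|+|\mathbf{I}(R)|)/2$. A subset $S$ is inverse-closed if $S^{-1}=S$. $C_R(\varphi)=\{x\in R\mid x^\varphi=x\}$. $\iota:R\to R$ is $x\mapsto x^{-1}$. Generalized dicyclic: for $A$ abelian of even order and exponent $>2$ and $y$ an involution of $A$, $\mathrm{Dic}(A,y,x)=\langle A,x\mid x^2=y,\ x^{-1}ax=a^{-1}\ \forall a\in A\rangle$; $\bar\iota_A$ is the automorphism with $a^{\bar\iota_A}=a$ and $(ax)^{\bar\iota_A}=ax^{-1}$ for all $a\in A$. *)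

(* Defs.v *)
From HB Require Import structures.
From mathcomp Require Import all_boot all_fingroup all_solvable.
Set Implicit Arguments. Unset Strict Implicit. Unset Printing Implicit Defensive.
Local Open Scope group_scope.

Definition invsq (gT : finGroupType) (R : {set gT}) : {set gT} :=
  [set x in R | x ^+ 2 == 1].

(* c(R) = (|R| + |I(R)|)/2  (the numerator is always even) *)
Definition cR (gT : finGroupType) (R : {set gT}) : nat :=
  ((#|R| + #|invsq R|) %/ 2)%N.

Definition inv_phi_sets (gT : finGroupType) (R : {set gT}) (phi : {perm gT})
  : {set {set gT}} :=
  [set S : {set gT} | [&& S \subset R, S^-1 == S & phi @: S == S]].

Definition fixR (gT : finGroupType) (R : {set gT}) (phi : {perm gT}) : {set gT} :=
  [set x in R | phi x == x].

(* Main.v *)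
Require Import Defs.
From HB Require Import structures.
From mathcomp Require Import all_boot all_fingroup all_solvable.
From mathcomp Require Import zify.
Set Implicit Arguments. Unset Strict Implicit. Unset Printing Implicit Defensive.
Local Open Scope group_scope.

Ltac clear_all := repeat match goal with H : _ |- _ => clear H end.

Lemma big_subgroup (gT : finGroupType) (G H : {group gT}) :
  H \subset G -> (#|G| < 2 * #|H|)%N -> H :=: G.
Proof.
move=> sHG lt; apply: index1g => //.
have L := Lagrange sHG; have p := indexg_gt0 G H.
have hp : (0 < #|H|)%N by apply: cardG_gt0.
case: (#|G : H|) L p lt => [//|[//|k]] L _ lt.
rewrite -L in lt; nia.
Qed.

Lemma three_quarters (gT : finGroupType) (G : {group gT}) (al : gT -> gT) :
  {in G &, {morph al : x y / x * y}} ->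
  (3 * #|G| < 4 * #|[set g in G | al g == g^-1]|)%N ->
  (forall g, g \in G -> al g = g^-1) /\ abelian G.
Proof.
move=> alM big.
set I := [set g in G | al g == g^-1] in big.
have sIG : I \subset G by apply/subsetP=> z; rewrite inE => /andP[].
have comm : forall x y, x \in I -> y \in G -> commute x y.
  move=> x y xI yG.
  have xG : x \in G by move: xI; rewrite inE => /andP[].
  have sJ : I :&: (x^-1 *: I) \subset 'C_G[x].
    apply/subsetP=> z /setIP[zI]; rewrite mem_lcoset invgK => xzI.
    rewrite in_setI cent1E.
    move: (zI) (xzI); rewrite !inE => /andP[zG /eqP alz] /andP[xzG /eqP alxz].
    rewrite zG /=; rewrite alM // alz in alxz.
    move: xI; rewrite inE => /andP[_ /eqP alx]; rewrite alx invgM in alxz.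
    apply/eqP; apply: invg_inj; rewrite !invgM; exact/esym.
  have cU : #|I :|: x^-1 *: I| <= #|G|.
    apply: subset_leq_card; rewrite subUset sIG /=.
    apply/subsetP=> z; rewrite mem_lcoset invgK => xzI.
    have : x * z \in G by apply: (subsetP sIG).
    by rewrite groupMl.
  have hUI := cardsUI I (x^-1 *: I); rewrite card_lcoset in hUI.
  have cJ := subset_leq_card sJ.
  have eqC : 'C_G[x] :=: G.
    apply: big_subgroup; first exact: subsetIl.
    have cJ2 : (#|I :&: x^-1 *: I| <= #|'C_G[x]%G|)%N by exact: cJ. have key : forall g u j i c : nat, (3*g < 4*i -> u <= g -> u + j = i + i -> j <= c -> g < 2*c)%N by clear_all; move=> *; lia. exact: (key _ _ _ _ _ big cU hUI cJ2).
  have : y \in 'C_G[x] by rewrite eqC.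
  by rewrite inE cent1E => /andP[_ /eqP].
have gI : group_set I.
  apply/group_setP; split.
    rewrite inE group1 invg1 /=.
    have := alM 1 1 (group1 G) (group1 G); rewrite mulg1 => h.
    apply/eqP; apply: (@mulIg _ (al 1)); by rewrite mul1g -h.
  move=> x y xI yI.
  have xG : x \in G by apply: (subsetP sIG).
  have yG : y \in G by apply: (subsetP sIG).
  move: (xI) (yI); rewrite !inE => /andP[_ /eqP ax] /andP[_ /eqP ay].
  rewrite groupM //= alM // ax ay invgM; apply/eqP.
  by rewrite -!invgM (comm x y xI yG).
have IG : I :=: G.
  apply: (@big_subgroup _ G (Group gI) sIG) => /=.
  have key : forall g i : nat, (3*g < 4*i -> g < 2*i)%N by clear_all; move=> *; lia.
  exact: key big.
split.
  move=> g gG; have : g \in I by rewrite IG.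
  by rewrite inE => /andP[_ /eqP].
apply/centsP=> x xG y yG.
have xI : x \in I by rewrite IG.
exact: (comm x y xI yG).
Qed.

Lemma aut_facts (gT : finGroupType) (R : {group gT}) (phi : {perm gT}) :
  phi \in Aut R ->
  [/\ perm_on R phi, {in R &, {morph phi : x y / x * y}},
      forall x, (phi x \in R) = (x \in R),
      forall x, phi x^-1 = (phi x)^-1 & phi 1 = 1].
Proof.
rewrite inE => /andP[pon /morphicP mor].
have p1 : phi 1 = 1.
  have := mor 1 1 (group1 R) (group1 R); rewrite mulg1 => h.
  by apply: (@mulIg _ (phi 1)); rewrite mul1g -h.
split=> // [x|x]; first exact: perm_closed.
case xR: (x \in R).
  have xiR : x^-1 \in R by rewrite groupV.
  have := mor x x^-1 xR xiR; rewrite mulgV p1 => h.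
  by apply/esym/eqP; rewrite eq_invg_mul -h.
have h1 : phi x = x := out_perm pon (negbT xR).
have h2 : phi x^-1 = x^-1 by apply: (out_perm pon); rewrite groupV xR.
by rewrite h1 h2.
Qed.

Lemma sum_mem (T : finType) (A X : {set T}) :
  (\sum_(x in A) ((x \in X) : nat) = #|A :&: X|)%N.
Proof.
rewrite (eq_bigr (fun x => if x \in X then 1 else 0)%N); last by move=> x _; case: (x \in X).
rewrite -big_mkcondr sum1_card; apply: eq_card => x; by rewrite !inE.
Qed.

Lemma sum_partition (T : finType) (P : {set {set T}}) (D X : {set T}) :
  partition P D -> (\sum_(A in P) #|A :&: X| = #|D :&: X|)%N.
Proof.
case/and3P=> /eqP cP tP _.
rewrite -cP -sum_mem (big_trivIset _ tP).
by apply: eq_bigr => A _; rewrite sum_mem.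
Qed.

Lemma even_inv (gT : finGroupType) (n : nat) (A : {set gT}) :
  #|A| = n -> (forall x, x \in A -> x^-1 \in A /\ x^-1 != x) -> ~~ odd n.
Proof.
elim: n {-2}n (leqnn n) A => [|N IH] n le A cA hA.
  by move: le; rewrite leqn0 => /eqP ->.
case: (set_0Vmem A) => [A0|[x xA]].
  by move: cA; rewrite A0 cards0 => <-.
have [xiA nx] := hA x xA.
set B := A :\: [set x; x^-1].
have cB : #|B| = (n - 2)%N.
  rewrite cardsD cA.
  have -> : A :&: [set x; x^-1] = [set x; x^-1].
    by apply/setIidPr; rewrite subUset !sub1set xA xiA.
  by rewrite cards2 eq_sym nx.
have n2 : (2 <= n)%N.
  have sA : [set x; x^-1] \subset A by rewrite subUset !sub1set xA xiA.
  by have := subset_leq_card sA; rewrite cards2 eq_sym nx cA.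
have : ~~ odd (n - 2) .
  apply: (IH _ _ B cB); first by lia.
  move=> y; rewrite !inE => /andP[yn yA]; have [yiA ny] := hA y yA.
  rewrite yiA ny; split=> //.
  rewrite andbT; move: yn; apply: contra.
  case/orP=> /eqP e; apply/orP; [right; rewrite -e invgK | left; rewrite -[y]invgK e invgK] => //.
move=> h; have e : odd n = odd (n - 2) by rewrite -{1}(subnK n2) oddD addbF.
by rewrite e.
Qed.

Lemma mem_imset_perm (T : finType) (s : {perm T}) (S : {set T}) x :
  (s x \in s @: S) = (x \in S).
Proof.
apply/idP/idP => [/imsetP[y yS /perm_inj ->] // | xS]; exact: imset_f.
Qed.

Lemma count_sets (gT : finGroupType) (R : {group gT}) (phi : {perm gT}) :
  phi \in Aut R ->
  exists k, (#|inv_phi_sets R phi| <= 2 ^ k)%N /\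
    (4 * k + #|[set x in R | (phi x != x) && (phi x != x^-1)]|
       <= 2 * (#|R| + #|invsq R|))%N.
Proof.
case/aut_facts=> pon mor cl pinv p1.
pose iot : {perm gT} := perm (@invg_inj gT).
have iotE : forall x, iot x = x^-1 by move=> x; rewrite permE.
pose H := <<[set phi; iot]>>%G.
have actsS : forall S : {set gT}, (forall x, (phi x \in S) = (x \in S)) ->
    (forall x, (x^-1 \in S) = (x \in S)) -> [acts H, on S | 'P].
  move=> S h1 h2; rewrite /= gen_subG subUset !sub1set.
  by apply/andP; split; apply/astabsP=> x /=; rewrite ?apermE ?iotE.
have actR : [acts H, on R | 'P] by apply: actsS => x; [exact: cl | exact: groupV].
pose Om := orbit 'P H @: R.
have partO : partition Om R := orbit_partition actR.
set M := [set x in R | _].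
set I := invsq R.
exists #|Om|; split.
  pose fS := fun S : {set gT} => [set O in Om | O \subset S].
  have actSets : forall S, S \in inv_phi_sets R phi -> [acts H, on S | 'P].
    move=> S; rewrite inE => /and3P[sSR /eqP SiS /eqP pS]; apply: actsS => x.
      by rewrite -{1}pS mem_imset_perm.
    by rewrite -{1}SiS mem_invg invgK.
  have inj : {in inv_phi_sets R phi &, injective fS}.
    suff h : forall S1 S2, S1 \in inv_phi_sets R phi -> fS S1 = fS S2 -> S1 \subset S2.
      by move=> S1 S2 h1 h2 e; apply/eqP; rewrite eqEsubset (h S1 S2) // (h S2 S1).
    move=> S1 S2 h1 e; apply/subsetP=> x xS1.
    have xR : x \in R.
      by move: h1; rewrite inE => /and3P[/subsetP sSR _ _]; apply: sSR.
    have : orbit 'P H x \in fS S1.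
      by rewrite inE imset_f //= (acts_sub_orbit _ (actSets _ h1)).
    rewrite e inE => /andP[_ /subsetP]; apply; exact: orbit_refl.
  have sub : fS @: inv_phi_sets R phi \subset powerset Om.
    apply/subsetP=> _ /imsetP[S _ ->]; rewrite powersetE.
    by apply/subsetP=> O; rewrite inE => /andP[].
  rewrite -(card_in_imset inj) -card_powerset; exact: subset_leq_card sub.
have closO : forall x a y, a \in H -> y \in orbit 'P H x -> a y \in orbit 'P H x.
  move=> x a y aH yO; have ac := acts_orbit 'P x (subsetT H).
  by rewrite -apermE (astabs_act _ (subsetP ac a aH)).
have phiH : phi \in H by rewrite mem_gen // !inE eqxx.
have iotH : iot \in H by rewrite mem_gen // !inE eqxx orbT.
have key : forall O, O \in Om ->
    (4 + #|O :&: M| <= 2 * #|O| + 2 * #|O :&: I|)%N.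
  move=> _ /imsetP[x xR ->]; set O := orbit 'P H x.
  have xO : x \in O := orbit_refl _ _ _.
  have inI : forall z, z \in O -> z ^+ 2 = 1 -> z \in O :&: I.
    move=> z zO z2; rewrite !inE zO z2 eqxx andbT /=.
    exact: (acts_in_orbit actR zO xR).
  case: (set_0Vmem (O :&: M)) => [OM0 | [y /setIP[yO yM]]].
    rewrite OM0 cards0 addn0.
    case: (boolP (x ^+ 2 == 1)) => x2.
      have h1 : (0 < #|O :&: I|)%N by apply/card_gt0P; exists x; apply: inI => //; exact/eqP.
      have h2 : (0 < #|O|)%N by apply/card_gt0P; exists x.
      have k : forall a b : nat, (0 < a -> 0 < b -> 4 <= 2*a + 2*b)%N by clear_all; move=> *; lia.
      exact: k _ _ h2 h1.
    have nx : x != x^-1.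
      apply: contraNneq x2 => e; by rewrite expgS expg1 {1}e mulVg.
    have sO : [set x; x^-1] \subset O.
      by rewrite subUset !sub1set xO -iotE closO.
    have h := subset_leq_card sO; rewrite cards2 nx in h.
    have k : forall a b : nat, (2 <= a -> 4 <= 2*a + 2*b)%N by clear_all; move=> *; lia.
    exact: k _ _ h.
  have yR : y \in R := acts_in_orbit actR yO xR.
  move: yM; rewrite inE yR /= => /andP[yM1 yM2].
  have cOM : (#|O :&: M| <= #|O|)%N by apply: subset_leq_card; apply: subsetIl.
  have pyO : phi y \in O by apply: closO.
  case: (boolP (y ^+ 2 == 1)) => y2.
    have py2 : (phi y) ^+ 2 = 1.
      by rewrite expgS expg1 -mor // -(expg1 y) -expgS (eqP y2) p1.
    have sO : [set y; phi y] \subset O :&: I.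
      rewrite subUset !sub1set; apply/andP; split; apply: inI => //; exact/eqP.
    have c2 : (2 <= #|O :&: I|)%N by have := subset_leq_card sO; rewrite cards2 eq_sym yM1.
    have k : forall a b c : nat, (2 <= c -> a <= b -> 4 + a <= 2*b + 2*c)%N by clear_all; move=> *; lia.
    exact: k _ _ _ c2 cOM.
  have n1 : y != y^-1.
    apply: contraNneq y2 => e; by rewrite expgS expg1 {1}e mulVg.
  have n2 : y != phi y by rewrite eq_sym.
  have n3 : y != (phi y)^-1.
    apply: contraNneq yM2 => e; by rewrite -[phi y]invgK -e.
  have n4 : y^-1 != phi y.
    apply: contraNneq yM2 => e; by rewrite -e.
  have n5 : y^-1 != (phi y)^-1 by rewrite (inj_eq invg_inj).
  have n6 : phi y != (phi y)^-1.
    apply: contraNneq y2 => e.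
    have : phi (y * y) = phi 1 by rewrite mor // p1 {1}e mulVg.
    by move/perm_inj => yy; rewrite expgS expg1 yy.
  pose Q := y |: (y^-1 |: (phi y |: [set (phi y)^-1])).
  have cQ : #|Q| = 4%N.
    rewrite /Q !cardsU1 cards1 !inE.
    by rewrite (negbTE n1) (negbTE n2) (negbTE n3) (negbTE n4) (negbTE n5) (negbTE n6).
  have sQ : Q \subset O.
    rewrite /Q !subUset !sub1set yO pyO -!iotE !closO //.
  have c4 := subset_leq_card sQ; rewrite cQ in c4.
  have k : forall a b c : nat, (4 <= b -> a <= b -> 4 + a <= 2*b + 2*c)%N by clear_all; move=> *; lia.
  exact: k _ _ _ c4 cOM.
have : (\sum_(O in Om) (4 + #|O :&: M|) <= \sum_(O in Om) (2 * #|O| + 2 * #|O :&: I|))%N.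
  by apply: leq_sum => O; exact: key.
rewrite !big_split /= !sum_nat_const muln0 !addn0 -(card_partition partO).
rewrite !(sum_partition _ partO).
have -> : R :&: M = M by apply/setIidPr/subsetP=> z; rewrite inE => /andP[].
have -> : R :&: I = I by apply/setIidPr/subsetP=> z; rewrite inE => /andP[].
move=> h.
have kk : forall o mm r i : nat, (o * 4 + mm <= r + r + (i + i) -> 4 * o + mm <= 2 * (r + i))%N
  by clear_all; move=> *; lia.
exact: kk _ _ _ _ h.
Qed.

Lemma sq1 (gT : finGroupType) (z : gT) : (z ^+ 2 == 1) = (z^-1 == z).
Proof. by rewrite eq_invg_mul expgS expg1. Qed.

Lemma structure (gT : finGroupType) (R : {group gT}) (phi : {perm gT}) :
  phi \in Aut R -> phi != 1 ->
  (24 * #|[set x in R | (phi x != x) && (phi x != x^-1)]| < #|R|)%N ->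
  (let A := fixR R phi in
   [/\ abelian A, (2 < exponent A)%N, #|R : A| = 2%N &
     exists2 x, x \in R :\: A &
       [/\ x ^+ 2 \in A, #[x ^+ 2] = 2%N,
           (forall a, a \in A -> x * a * x^-1 = a^-1) &
           (forall a, a \in A -> phi a = a /\ phi (a * x) = a * x^-1)]])
  \/
  [/\ abelian R, (2 < exponent R)%N & forall x, x \in R -> phi x = x^-1].
Proof.
move=> autphi nphi1 smallM.
have [pon mor cl pinv p1] := aut_facts autphi.
have phi1 : (forall z, z \in R -> phi z = z) -> False.
  move=> h; move/eqP: nphi1; apply; apply/permP=> z; rewrite perm1.
  case zR: (z \in R); first exact: h.
  exact: (out_perm pon (negbT zR)).
set F := fixR R phi.
have inF : forall z, (z \in F) = (z \in R) && (phi z == z) by move=> z; rewrite inE.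
have gF : group_set F.
  apply/group_setP; split; first by rewrite inF group1 p1 eqxx.
  move=> x y; rewrite !inF => /andP[xR /eqP px] /andP[yR /eqP py].
  by rewrite groupM // mor // px py eqxx.
pose FG := Group gF.
have FM : forall a b, a \in F -> b \in F -> a * b \in F by move=> a b; exact: (@groupM _ FG).
have FV : forall a, (a^-1 \in F) = (a \in F) by move=> a; exact: (@groupV _ FG).
have sFR : F \subset R by apply/subsetP=> z; rewrite inF => /andP[].
have [z0 z0R z0F] : exists2 z, z \in R & z \notin F.
  case: (boolP [exists z in R, z \notin F]) => [/exists_inP // | /exists_inPn h].
  exfalso; apply: phi1 => z zR; have := h z zR; rewrite negbK inF zR /=; exact/eqP.
set n := #|R|; set m := #|F|.
have m0 : (0 < m)%N by rewrite /m; exact: (cardG_gt0 FG).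
have m2n : (2 * m <= n)%N.
  have L := Lagrange (sFR : FG \subset R).
  have i1 : #|R : FG| != 1%N.
    apply/eqP=> i1; have e := index1g (sFR : FG \subset R) i1.
    by move: z0F; rewrite -[F]/(gval FG) e z0R.
  have ip := indexg_gt0 R FG.
  move: L i1 ip; rewrite /n /m /=.
  case: #|R : F| => [//|[//|k]] L _ _; rewrite -L.
  have kk : forall a k : nat, (2 * a <= a * k.+2)%N by clear_all; move=> *; nia.
  exact: kk.
set T := [set x in R | phi x == x^-1].
set M := [set x in R | _] in smallM.
have inT : forall z, (z \in T) = (z \in R) && (phi z == z^-1) by move=> z; rewrite inE.
have inM : forall z, (z \in M) = [&& z \in R, z \notin F & z \notin T].
  by move=> z; rewrite !inE; case: (z \in R).
have cosT : forall f x, f \in F -> x \in T -> (f * x \in T) = (f ^ x^-1 == f^-1).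
  move=> f x; rewrite inF inT => /andP[fR /eqP pf] /andP[xR /eqP px].
  rewrite inT groupM //= mor // pf px invMg conjgE invgK.
  by rewrite -(inj_eq (mulgI x)) mulKVg mulgA.
have rcR : forall x y, x \in R -> y \in F :* x -> y \in R.
  move=> x y xR; rewrite mem_rcoset => h.
  by rewrite -(mulgKV x y) groupM // (subsetP sFR).
have rcF : forall x y, x \notin F -> y \in F :* x -> y \notin F.
  move=> x y xF; rewrite mem_rcoset => h; apply: contra xF => yF.
  have : (y * x^-1)^-1 * y \in F by apply: FM => //; rewrite FV.
  by rewrite invMg invgK mulgKV.
set Good := [set x in R :\: F | F :* x \subset T].
set Bad := (R :\: F) :\: Good.
have good_inv : forall x f, x \in Good -> f \in F -> f ^ x^-1 = f^-1.
  move=> x f; rewrite inE => /andP[_ /subsetP sT] fF.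
  have xT : x \in T by apply: sT; exact: (rcoset_refl FG _).
  apply/eqP; rewrite -(cosT f x fF xT); apply: sT.
  by rewrite mem_rcoset mulgK.
have goodT : forall x, x \in Good -> x \in T.
  by move=> x; rewrite inE => /andP[_ /subsetP]; apply; exact: (rcoset_refl FG _).
have badM : forall b, b \in Bad -> (m <= 4 * #|F :* b :&: M|)%N.
  move=> b; rewrite /Bad !in_setD => /andP[ngood /andP[bF bR]].
  case: (set_0Vmem (F :* b :&: T)) => [FT0 | [t /setIP[tFb tT]]].
    have -> : F :* b :&: M = F :* b.
      apply/setIidPl/subsetP=> y yFb; rewrite inM (rcR b y bR yFb) (rcF b y bF yFb) /=.
      by apply/negP=> yT; move: FT0 => /setP/(_ y); rewrite in_setI in_set0 yFb yT.
    by rewrite card_rcoset leq_pmull.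
  have eFt : F :* t = F :* b by apply/(@rcoset_eqP _ FG).
  set J := [set f in F | f * t \in T].
  have J34 : (4 * #|J| <= 3 * m)%N.
    rewrite leqNgt; apply/negP => big.
    have eJ : [set g in FG | g ^ t^-1 == g^-1] = J.
      apply/setP=> f; rewrite !inE -inT -inF; case fF: (f \in F) => //=.
      by rewrite (cosT f t fF tT).
    have [all _] := three_quarters (G := FG) (al := fun g => g ^ t^-1)
        (fun x y _ _ => conjMg x y t^-1) (ltac:(rewrite eJ; exact: big)).
    move: ngood; apply/negP; rewrite negbK in_set in_setD bF bR /= -eFt.
    apply/subsetP=> y; rewrite mem_rcoset => yt.
    rewrite -(mulgKV t y) (cosT _ _ yt tT); exact/eqP/all.
  have sJF : J \subset F by apply/subsetP=> f; rewrite inE => /andP[].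
  have cD : #|F :\: J| = (m - #|J|)%N.
    by rewrite cardsD (setIidPr sJF).
  have inj : {in F :\: J &, injective (fun f => f * t)}.
    by move=> f g _ _ /mulIg.
  have sub : (fun f => f * t) @: (F :\: J) \subset F :* b :&: M.
    apply/subsetP=> _ /imsetP[f /setDP[fF fJ] ->].
    have fFt : f * t \in F :* b by rewrite -eFt mem_rcoset mulgK.
    rewrite inE fFt inM (rcR b _ bR fFt) (rcF b _ bF fFt) /=.
    by move: fJ; rewrite inE fF.
  have := subset_leq_card sub; rewrite (card_in_imset inj) cD => h.
  have k : forall a j mm : nat, (4 * j <= 3 * mm -> mm - j <= a -> mm <= 4 * a)%N
    by clear_all; move=> *; lia.
  exact: k _ _ _ J34 h.
have BadM : (#|Bad| <= 4 * #|M|)%N.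
  have S1 : (#|Bad| * m <= 4 * \sum_(b in Bad) #|F :* b :&: M|)%N.
    rewrite big_distrr /= -sum_nat_const; apply: leq_sum => b bB; exact: badM.
  have S2 : (\sum_(b in Bad) #|F :* b :&: M| <= #|M| * m)%N.
    rewrite (eq_bigr (fun b => \sum_(y in M) ((y \in F :* b) : nat))); last first.
      by move=> b _; rewrite sum_mem setIC.
    rewrite exchange_big /= -sum_nat_const; apply: leq_sum => y yM.
    rewrite (eq_bigr (fun b => ((b \in F :* y) : nat))); last first.
      move=> b _; congr (nat_of_bool _); rewrite !mem_rcoset.
      by rewrite -FV invMg invgK.
    rewrite sum_mem; apply: leq_trans (subset_leq_card (subsetIr _ _)) _.
    by rewrite card_rcoset.
  have k : forall bb mm s M : nat, (0 < mm -> bb * mm <= 4 * s -> s <= M * mm -> bb <= 4 * M)%N.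
    by clear_all; move=> *; nia.
  exact: k _ _ _ _ m0 S1 S2.
have cRF : #|R :\: F| = (n - m)%N.
  by rewrite cardsD (setIidPr sFR).
have sGood : Good \subset R :\: F by apply/subsetP=> x; rewrite inE => /andP[].
have cGB : (#|Good| + #|Bad| = n - m)%N.
  rewrite /Bad cardsD -cRF.
  have -> : (R :\: F) :&: Good = Good by apply/setIidPr.
  by rewrite subnKC // subset_leq_card.
have B6 : (6 * #|Bad| < n)%N.
  have k : forall b mm nn : nat, (b <= 4 * mm -> 24 * mm < nn -> 6 * b < nn)%N by clear_all; move=> *; lia.
  exact: k _ _ _ BadM smallM.
case: (pickP [pred f | (f \in F) && (f ^+ 2 != 1)]) => [f0 /andP[f0F f02] | allF].
  have [x0 x0G] : exists x0, x0 \in Good.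
    apply/card_gt0P.
    have k : forall g b nn mm, (g + b = nn - mm -> 2 * mm <= nn -> 6 * b < nn -> 0 < g)%N
      by clear_all; move=> *; lia.
    exact: k _ _ _ _ cGB m2n B6.
  have [x0R x0F] : x0 \in R /\ x0 \notin F.
    by move: x0G; rewrite inE in_setD => /andP[/andP[-> ->]].
  have x0T := goodT x0 x0G.
  have notgood : forall g, g \in Good -> g * x0 \notin Good.
    move=> g gG; apply/negP => gxG.
    have := good_inv _ _ gxG f0F.
    rewrite invMg conjgM (good_inv _ _ x0G f0F) conjVg (good_inv _ _ gG f0F) invgK => e.
    by move: f02; rewrite sq1 -e eqxx.
  have G2 : (2 * #|Good| <= n)%N.
    have inj : {in Good &, injective (fun g => g * x0)} by move=> f g _ _ /mulIg.
    have sub : (fun g => g * x0) @: Good \subset R :\: Good.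
      apply/subsetP=> _ /imsetP[g gG ->]; rewrite in_setD notgood //= groupM //.
      by move: gG; rewrite inE in_setD => /andP[/andP[_ ->]].
    have := subset_leq_card sub; rewrite (card_in_imset inj) cardsD.
    have -> : R :&: Good = Good.
      by apply/setIidPr/subsetP=> z; rewrite inE in_setD => /andP[/andP[_ ->]].
    have k : forall g nn, (g <= nn - g -> 2 * g <= nn)%N by clear_all; move=> *; lia.
    exact: k.
  have Bad0 : #|Bad| = 0%N.
    case: (set_0Vmem Bad) => [-> | [b bB]]; first exact: cards0.
    exfalso.
    have sB : F :* b \subset Bad.
      move: (bB); rewrite /Bad in_setD in_setD => /andP[bnG /andP[bF bR]].
      apply/subsetP=> y yFb.
      have e : F :* y = F :* b by apply/(@rcoset_eqP _ FG).
      rewrite /Bad in_setD in_setD (rcR b y bR yFb) (rcF b y bF yFb) andbT.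
      by move: bnG; rewrite !in_set andbT -!inF bF bR e (rcF b y bF yFb) (rcR b y bR yFb).
    have := subset_leq_card sB; rewrite card_rcoset => mB.
    have k : forall g b nn mm, (g + b = nn - mm -> 2 * g <= nn -> mm <= b -> 6 * b < nn -> False)%N
      by clear_all; move=> *; lia.
    exact: k _ _ _ _ cGB G2 mB B6.
  have n2m : n = (2 * m)%N.
    have k : forall g b nn mm, (g + b = nn - mm -> 2 * g <= nn -> b = 0 -> 2 * mm <= nn -> nn = 2 * mm)%N
      by clear_all; move=> *; lia.
    exact: k _ _ _ _ cGB G2 Bad0 m2n.
  have RF : R :\: F = F :* x0.
    apply/eqP; rewrite eq_sym eqEcard card_rcoset cRF n2m.
    apply/andP; split; last by rewrite -/m mul2n -addnn addnK.
    apply/subsetP=> y yF; by rewrite in_setD (rcR x0 y x0R yF) (rcF x0 y x0F yF).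
  have px0 : phi x0 = x0^-1 by move: x0T; rewrite inT => /andP[_ /eqP].
  left => /=.
  have fixF : forall a, a \in F -> phi a = a by move=> a; rewrite inF => /andP[_ /eqP].
  split.
  - have eS : [set g in FG | g ^ x0^-1 == g^-1] = F.
      apply/setP=> f; rewrite inE; case fF: (f \in F) => //=.
      by rewrite (good_inv _ _ x0G fF) eqxx.
    have big : (3 * #|FG| < 4 * #|[set g in FG | (g ^ x0^-1 == g^-1)%g]|)%N.
      have kk : forall a : nat, (0 < a -> 3 * a < 4 * a)%N by clear_all; move=> *; lia.
      rewrite eS; exact: kk _ m0.
    by have [_ ab] := three_quarters (G := FG) (al := fun g => g ^ x0^-1)
        (fun x y _ _ => conjMg x y x0^-1) big.
  - rewrite ltnNge; apply/negP => ex2.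
    have e2 : exponent FG %| 2.
      by move: ex2 (exponent_gt0 FG); case: (exponent FG) => [|[|[|]]].
    have : f0 ^+ 2 = 1.
      by apply/eqP; rewrite -order_dvdn; apply: dvdn_trans (dvdn_exponent f0F) e2.
    by move/eqP; rewrite (negbTE f02).
  - have L := Lagrange (sFR : FG \subset R).
    have k : forall mm i nn, (0 < mm -> mm * i = nn -> nn = 2 * mm -> i = 2)%N by clear_all; move=> *; nia.
    exact: k _ _ _ m0 L n2m.
  exists x0; first by rewrite in_setD x0F x0R.
  have x2F : x0 ^+ 2 \in F.
    apply: contraT => nx.
    have : x0 ^+ 2 \in R :\: F by rewrite in_setD nx groupX.
    rewrite RF mem_rcoset expgS expg1 mulgK => h.
    by rewrite h in x0F.
  split=> //.
  - set y := x0 ^+ 2.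
    have py : phi y = y^-1 by rewrite /y expgS expg1 mor // px0 invMg.
    have y2 : y ^+ 2 = 1 by apply/eqP; rewrite sq1 -py fixF.
    have y1 : y != 1.
      apply/negP => /eqP y1; apply: phi1 => z zR.
      case zF: (z \in F); first exact: fixF.
      have : z \in R :\: F by rewrite in_setD zF zR.
      rewrite RF mem_rcoset => fF.
      have xi : x0^-1 = x0 by apply/eqP; rewrite -sq1 -/y y1.
      move: fF; set f := z * x0^-1 => fF.
      have ez : z = f * x0 by rewrite /f mulgKV.
      have fR : f \in R := subsetP sFR _ fF.
      by rewrite ez mor // (fixF _ fF) px0 xi.
    have o2 : #[y] %| 2 by rewrite order_dvdn y2.
    have o1 : #[y] != 1%N by rewrite order_eq1.
    by apply/eqP; rewrite eqn_leq dvdn_leq //= ltn_neqAle eq_sym o1 order_gt0.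
  - move=> a aF; have := good_inv _ _ x0G aF.
    by rewrite conjgE invgK mulgA.
  - move=> a aF; split; first exact: fixF.
    by rewrite mor // ?(subsetP sFR) // fixF // px0.
have sT : R :\: Bad \subset T.
  apply/subsetP=> z /setDP[zR zB].
  case zF: (z \in F).
    have := allF z; rewrite /= zF /= => /negbFE z2.
    move: zF; rewrite inF inT zR => /andP[_ /eqP ->] /=.
    by rewrite eq_sym -sq1.
  apply: goodT; apply: contraNT zB => zG.
  by rewrite /Bad in_setD zG in_setD zF zR.
have cT : (n - #|Bad| <= #|T|)%N.
  have := subset_leq_card sT; rewrite cardsD.
  have -> : R :&: Bad = Bad.
    by apply/setIidPr/subsetP=> z; rewrite /Bad !in_setD => /andP[_ /andP[_ ->]].
  by [].
have big : (3 * #|R| < 4 * #|[set g in R | phi g == g^-1]|)%N.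
  have k : forall b t nn : nat, (6 * b < nn -> nn - b <= t -> 3 * nn < 4 * t)%N by clear_all; move=> *; lia.
  exact: k _ _ _ B6 cT.
have [allR abR] := three_quarters (G := R) (al := fun g => phi g) mor big.
right; split=> //.
rewrite ltnNge; apply/negP => ex2.
apply: phi1 => z zR.
have e2 : exponent R %| 2.
  by move: ex2 (exponent_gt0 R); case: (exponent R) => [|[|[|]]].
have z2 : z ^+ 2 = 1.
  by apply/eqP; rewrite -order_dvdn; apply: dvdn_trans (dvdn_exponent zR) e2.
by rewrite allR //; apply/eqP; rewrite -sq1 z2.
Qed.



Unset Implicit Arguments.
Set Strict Implicit.
Set Printing Implicit Defensive.

Theorem lemma2p4 (gT : finGroupType) (R : {group gT}) (phi : {perm gT}) :
  phi \in Aut R -> phi != 1 ->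
  (* (1): #sets <= 2^(c(R) - |R|/96), i.e. #sets^96 <= 2^(96 c(R) - |R|) *)
  (#|inv_phi_sets R phi| ^ 96 <= 2 ^ (96 * cR R - #|R|))%N
  \/
  (* (2) *)
  (let A := fixR R phi in
   [/\ abelian A, (2 < exponent A)%N, #|R : A| = 2%N &
     exists2 x, x \in R :\: A &
       [/\ x ^+ 2 \in A, #[x ^+ 2] = 2%N,
           (forall a, a \in A -> x * a * x^-1 = a^-1) &
           (forall a, a \in A -> phi a = a /\ phi (a * x) = a * x^-1)]])
  \/
  (* (3) *)
  [/\ abelian R, (2 < exponent R)%N & forall x, x \in R -> phi x = x^-1].
Proof.
move=> autphi nphi1.
case: (leqP #|R| (24 * #|[set x in R | (phi x != x) && (phi x != x^-1)]|)) => hM;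
  last by right; exact: structure.
left.
have [k [hk hk2]] := count_sets autphi.
have ev : ~~ odd (#|R| + #|invsq R|).
  have sI : invsq R \subset R by apply/subsetP=> z; rewrite inE => /andP[].
  have cD : #|R| = (#|invsq R| + #|R :\: invsq R|)%N.
    by rewrite cardsD (setIidPr sI) subnKC // subset_leq_card.
  have := @even_inv gT _ (R :\: invsq R) erefl.
  rewrite cD addnAC addnn oddD odd_double /= => -> //.
  move=> x; rewrite !inE => /andP[x2 xR]; rewrite groupV xR /= andbT.
  rewrite -sq1 expgVn; move: x2; rewrite xR /= => x2; split=> //; apply: contra x2 => /eqP h; apply/eqP; by rewrite -[x ^+ 2]invgK h invg1.
have c2 : (2 * cR R = #|R| + #|invsq R|)%N.
  by rewrite /cR mulnC divnK // dvdn2.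
set N := #|inv_phi_sets R phi| in hk *.
set mm := #|[set x in R | _]| in hM hk2.
apply: leq_trans (_ : (2 ^ k) ^ 96 <= _)%N.
  by rewrite leq_exp2r.
rewrite -expnM leq_pexp2l //.
move: hk2 hM c2; clear_all; move=> *; lia.
Qed.
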